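(* Let $(\Omega,\mathcal A)$ be a Borel space, $(\Omega,X_\bullet)$ a Borel field of proper CAT(0) spaces, and $B_\bullet$ a Borel subfield such that $B_\omega$ is a non-empty bounded subset of $X_\omega$ for every $\omega$. Then (i) the circumradius function $\omega\mapsto r(B_\omega)$ is Borel, and (ii) the section of circumcenters $\omega\mapsto c_{B_\omega}$ is a Borel section of $(\Omega,X_\bullet)$.
   Context: Borel field of metric spaces: $(X_\omega,d_\omega)_{\omega\in\Omega}$ metric spaces; a section is $x_\bullet=(x_\omega)$, $x_\omega\in X_\omega$. A Borel structure is a set $\mathcal L(\Omega,X_\bullet)$ of sections such that (a) $\omega\mapsto d_\omega(x_\omega,y_\omega)$ is Borel for all $x_\bullet,y_\bullet\in\mathcal L$; (b) any section $y_\bullet$ with $\omega\mapsto d_\omega(x_\omega,y_\omega)$ Borel for all $x_\bullet\in\mathcal L$ lies in $\mathcal L$; (c) there is a countable $\mathcal D=\{x^n_\bullet\}\subseteq\mathcal L$ (fundamental family) with $\{x^n_\omega\}_n$ dense in $X_\omega$ for all $\omega$; elements of $\mathcal L$ are Borel sections. For Borel $\Omega'$, $\mathcal L(\Omega',X_\bullet)$ = restrictions to $\Omega'$ of Borel sections. A subfield is $A_\bullet=(A_\omega)$ with $A_\omega\subseteq X_\omega$; it is Borel if $\Omega'=\{\omega:A_\omega\ne\emptyset\}\in\mathcal A$ and there are countably many $y^n_\bullet\in\mathcal L(\Omega',X_\bullet)$ with $y^n_\omega\in A_\omega$ and $A_\omega\subseteq\overline{\{y^n_\omega\}_n}$ for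 all $\omega\in\Omega'$. For a non-empty bounded $B$ in a complete CAT(0) space $X$, the circumradius is $r(B)=\inf\{r>0\mid\exists x\in X,\ B\subseteq\overline B(x,r)\}$ and the circumcenter $c_B$ is the unique point with $B\subseteq\overline B(c_B,r(B))$. *)

(* Defs.v *)
From Stdlib Require Import Reals Lra List.
Open Scope R_scope.


Definition is_sigma_algebra {T : Type} (A : (T -> Prop) -> Prop) : Prop :=
  A (fun _ => True) /\
  (forall S, A S -> A (fun x => ~ S x)) /\
  (forall S : nat -> T -> Prop, (forall n, A (S n)) -> A (fun x => exists n, S n x)).

Definition R_open (U : R -> Prop) : Prop :=
  forall x, U x -> exists e, 0 < e /\ forall y, Rabs (y - x) < e -> U y.

Definition R_Borel (S : R -> Prop) : Prop :=
  forall M : (R -> Prop) -> Prop,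
    is_sigma_algebra M -> (forall U, R_open U -> M U) -> M S.

Definition Borel_function {Om : Type} (A : (Om -> Prop) -> Prop) (f : Om -> R) : Prop :=
  forall S, R_Borel S -> A (fun w => S (f w)).

Definition is_metric {X : Type} (d : X -> X -> R) : Prop :=
  (forall x y, d x y = 0 <-> x = y) /\
  (forall x y, d x y = d y x) /\
  (forall x y z, d x z <= d x y + d y z).

Definition open_set {X : Type} (d : X -> X -> R) (U : X -> Prop) : Prop :=
  forall x, U x -> exists e, 0 < e /\ forall y, d x y < e -> U y.

Definition compact_set {X : Type} (d : X -> X -> R) (K : X -> Prop) : Prop :=
  forall F : (X -> Prop) -> Prop,
    (forall U, F U -> open_set d U) ->
    (forall x, K x -> exists U, F U /\ U x) ->
    exists l : list (X -> Prop),
      (forall U, In U l -> F U) /\ (forall x, K x -> exists U, In U l /\ U x).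

Definition closed_ball {X : Type} (d : X -> X -> R) (x : X) (r : R) : X -> Prop :=
  fun y => d x y <= r.

Definition proper_space {X : Type} (d : X -> X -> R) : Prop :=
  forall x r, compact_set d (closed_ball d x r).

Definition bounded_set {X : Type} (d : X -> X -> R) (B : X -> Prop) : Prop :=
  exists x r, forall b, B b -> d x b <= r.

Definition is_geodesic {X : Type} (d : X -> X -> R) (x y : X) (g : R -> X) : Prop :=
  g 0 = x /\ g (d x y) = y /\
  forall s t, 0 <= s <= d x y -> 0 <= t <= d x y -> d (g s) (g t) = Rabs (s - t).

Definition geodesic_space {X : Type} (d : X -> X -> R) : Prop :=
  forall x y, exists g, is_geodesic d x y g.

Definition eucl2 (a b : R * R) : R :=
  sqrt ((fst a - fst b) ^ 2 + (snd a - snd b) ^ 2).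

Definition on_side {X : Type} (d : X -> X -> R) (x y : X) (g : R -> X)
  (a b : R * R) (p : X) (pb : R * R) : Prop :=
  exists t, 0 <= t <= 1 /\ p = g (t * d x y) /\
    pb = ((1 - t) * fst a + t * fst b, (1 - t) * snd a + t * snd b).

Definition on_triangle {X : Type} (d : X -> X -> R) (x y z : X)
  (gxy gyz gzx : R -> X) (a b c : R * R) (p : X) (pb : R * R) : Prop :=
  on_side d x y gxy a b p pb \/ on_side d y z gyz b c p pb \/ on_side d z x gzx c a p pb.

Definition CAT0_inequality {X : Type} (d : X -> X -> R) : Prop :=
  forall (x y z : X) (gxy gyz gzx : R -> X) (a b c : R * R),
    is_geodesic d x y gxy -> is_geodesic d y z gyz -> is_geodesic d z x gzx ->
    eucl2 a b = d x y -> eucl2 b c = d y z -> eucl2 c a = d z x ->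
    forall p pb q qb,
      on_triangle d x y z gxy gyz gzx a b c p pb ->
      on_triangle d x y z gxy gyz gzx a b c q qb ->
      d p q <= eucl2 pb qb.

Definition CAT0_space {X : Type} (d : X -> X -> R) : Prop :=
  is_metric d /\ geodesic_space d /\ CAT0_inequality d.

Definition is_inf (S : R -> Prop) (m : R) : Prop :=
  (forall r, S r -> m <= r) /\ (forall m', (forall r, S r -> m' <= r) -> m' <= m).

Definition is_circumradius {X : Type} (d : X -> X -> R) (B : X -> Prop) (r : R) : Prop :=
  is_inf (fun s => 0 < s /\ exists x, forall b, B b -> d x b <= s) r.

Definition is_circumcenter {X : Type} (d : X -> X -> R) (B : X -> Prop) (c : X) : Prop :=
  exists r, is_circumradius d B r /\ forall b, B b -> d c b <= r.

Definition section {Om : Type} (X : Om -> Type) : Type := forall w, X w.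

Definition is_Borel_structure {Om : Type} (A : (Om -> Prop) -> Prop) (X : Om -> Type)
  (d : forall w, X w -> X w -> R) (L : section X -> Prop) : Prop :=
  (forall x y, L x -> L y -> Borel_function A (fun w => d w (x w) (y w))) /\
  (forall y : section X,
     (forall x, L x -> Borel_function A (fun w => d w (x w) (y w))) -> L y) /\
  (exists D : nat -> section X,
     (forall n, L (D n)) /\
     forall w (x : X w) e, 0 < e -> exists n, d w (D n w) x < e).

(* Borel subfield.  Elements of L(Om', X) are restrictions to Om' of Borel
   sections; we represent y^n by a Borel section whose restriction is y^n. *)
Definition is_Borel_subfield {Om : Type} (A : (Om -> Prop) -> Prop) (X : Om -> Type)
  (d : forall w, X w -> X w -> R) (L : section X -> Prop)
  (B : forall w, X w -> Prop) : Prop :=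
  A (fun w => exists x, B w x) /\
  exists y : nat -> section X,
    (forall n, L (y n)) /\
    forall w, (exists x, B w x) ->
      (forall n, B w (y n w)) /\
      (forall x, B w x -> forall e, 0 < e -> exists n, d w x (y n w) < e).

(* Main.v *)
Require Import Defs.
From Stdlib Require Import Reals Lra Lia Psatz List Classical ClassicalEpsilon FunctionalExtensionality PropExtensionality ZArith.
Require Import Defs.
Open Scope R_scope.

Lemma met_refl {X} (d : X -> X -> R) : is_metric d -> forall x, d x x = 0.
Proof. intros [H _] x. apply H. reflexivity. Qed.
Lemma met_sym {X} (d : X -> X -> R) : is_metric d -> forall x y, d x y = d y x.
Proof. intros [_ [H _]]. exact H. Qed.
Lemma met_tri {X} (d : X -> X -> R) : is_metric d -> forall x y z, d x z <= d x y + d y z.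
Proof. intros [_ [_ H]]. exact H. Qed.
Lemma met_pos {X} (d : X -> X -> R) : is_metric d -> forall x y, 0 <= d x y.
Proof. intros M x y. pose proof (met_tri d M x y x) as H.
  rewrite (met_refl d M), (met_sym d M y x) in H. lra. Qed.

Lemma apollonius {X} (d : X -> X -> R) : CAT0_space d -> forall x y, 0 < d x y ->
  exists m, forall z, (d m z)^2 <= (d x z)^2/2 + (d y z)^2/2 - (d x y)^2/4.
Proof.
  intros [M [G C]] x y Hxy.
  destruct (G x y) as [g Hg].
  exists (g (/2 * d x y)). intros z.
  destruct (G y z) as [g2 Hg2]. destruct (G z x) as [g3 Hg3].
  pose proof (met_tri d M y x z) as T1.
  pose proof (met_tri d M x y z) as T2.
  pose proof (met_tri d M x z y) as T3.
  pose proof (met_pos d M x z) as P1.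
  pose proof (met_pos d M y z) as P2.
  rewrite (met_sym d M y x) in T1. rewrite (met_sym d M z y) in T3.
  remember (d x y) as D. remember (d x z) as p. remember (d y z) as q.
  pose (u := (D^2 + p^2 - q^2)/(2*D)).
  assert (Hu : u * (2*D) = D^2 + p^2 - q^2) by (unfold u; field; lra).
  assert (HN : (D^2+p^2-q^2)^2 <= 4*D^2*p^2).
  { assert (H1 : (D^2+p^2-q^2 - 2*D*p) <= 0).
    { replace (D^2+p^2-q^2 - 2*D*p) with ((D-p-q)*(D-p+q)) by ring.
      assert (0 <= D-p+q) by lra; assert (D-p-q <= 0) by lra; nra. }
    assert (H2 : 0 <= (D^2+p^2-q^2 + 2*D*p)).
    { replace (D^2+p^2-q^2 + 2*D*p) with ((D+p-q)*(D+p+q)) by ring.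
      apply Rmult_le_pos; lra. }
    nra. }
  assert (Hv : 0 <= p^2 - u^2).
  { rewrite <- Hu in HN.
    assert (HD2 : 0 < 4*D^2) by nra.
    assert (HH : (p^2 - u^2) * (4*D^2) >= 0) by nra.
    destruct (Rle_or_lt 0 (p^2-u^2)) as [h|h]; [exact h|].
    exfalso. assert ((p^2 - u^2) * (4*D^2) < 0) by (apply Rmult_neg_pos; lra). lra. }
  pose (v := sqrt (p^2 - u^2)).
  assert (Hvv : v^2 = p^2 - u^2) by (apply pow2_sqrt; exact Hv).
  assert (E1 : eucl2 (0,0) (D,0) = d x y).
  { unfold eucl2; simpl. rewrite <- HeqD. replace ((0-D)*((0-D)*1) + (0-0)*((0-0)*1)) with (D^2) by ring.
    apply sqrt_pow2; lra. }
  assert (E2 : eucl2 (D,0) (u,v) = d y z).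
  { unfold eucl2; simpl. rewrite <- Heqq.
    replace ((D-u)*((D-u)*1) + (0-v)*((0-v)*1)) with (q^2) by nra.
    apply sqrt_pow2; lra. }
  assert (E3 : eucl2 (u,v) (0,0) = d z x).
  { unfold eucl2; simpl. rewrite (met_sym d M z x), <- Heqp.
    replace ((u-0)*((u-0)*1) + (v-0)*((v-0)*1)) with (p^2) by nra.
    apply sqrt_pow2; lra. }
  assert (Hp : on_triangle d x y z g g2 g3 (0,0) (D,0) (u,v) (g (/2 * d x y))
      ((1 - /2) * 0 + /2 * D, (1 - /2) * 0 + /2 * 0)).
  { left. exists (/2). split; [lra|]. split; reflexivity. }
  assert (Hq : on_triangle d x y z g g2 g3 (0,0) (D,0) (u,v) z
      ((1 - 0) * u + 0 * 0, (1 - 0) * v + 0 * 0)).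
  { right; right. exists 0. split; [lra|]. split; [|reflexivity].
    rewrite Rmult_0_l. destruct Hg3 as [H0 _]. symmetry; exact H0. }
  pose proof (C x y z g g2 g3 (0,0) (D,0) (u,v) Hg Hg2 Hg3 E1 E2 E3 _ _ _ _ Hp Hq) as Hc.
  unfold eucl2 in Hc; simpl in Hc.
  set (E := ((1 - / 2) * 0 + / 2 * D - ((1 - 0) * u + 0 * 0)) *
       (((1 - / 2) * 0 + / 2 * D - ((1 - 0) * u + 0 * 0)) * 1) +
       ((1 - / 2) * 0 + / 2 * 0 - ((1 - 0) * v + 0 * 0)) *
       (((1 - / 2) * 0 + / 2 * 0 - ((1 - 0) * v + 0 * 0)) * 1)) in Hc.
  assert (HE' : E = D^2/4 - (u*(2*D))/2 + (u^2 + v^2)) by (unfold E; field).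
  assert (HE : E = p^2/2 + q^2/2 - D^2/4).
  { rewrite HE', Hu. replace (u^2+v^2) with (p^2) by lra. field. }
  assert (HE0 : 0 <= E) by (unfold E; apply Rplus_le_le_0_compat; rewrite Rmult_1_r; apply Rle_0_sqr).
  pose proof (met_pos d M (g (/2*D)) z).
  rewrite <- HeqD in Hc. rewrite <- HE.
  rewrite <- (pow2_sqrt E HE0). nra.
Qed.

Lemma rad_nonneg {X} (d : X -> X -> R) B r : is_circumradius d B r -> 0 <= r.
Proof. intros [_ H]. apply H. intros s [Hs _]. lra. Qed.

Lemma rad_le {X} (d : X -> X -> R) B r x t : is_circumradius d B r ->
  (forall b, B b -> d x b <= t) -> 0 <= t -> r <= t.
Proof.
  intros [H _] Hb Ht. apply Rle_plus_epsilon. intros e He.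
  apply H. split; [lra|]. exists x. intros b Bb. specialize (Hb b Bb). lra.
Qed.

Lemma rad_approx {X} (d : X -> X -> R) B r e : is_circumradius d B r -> 0 < e ->
  exists s x, s < r + e /\ forall b, B b -> d x b <= s.
Proof.
  intros [H1 H2] He. apply NNPP. intro N.
  assert (r + e <= r); [|lra].
  apply H2. intros s [Hs [x Hx]].
  destruct (Rle_or_lt (r+e) s) as [h|h]; [exact h|].
  exfalso. apply N. exists s, x. split; assumption.
Qed.

Lemma inf_unique S m m' : is_inf S m -> is_inf S m' -> m = m'.
Proof. intros [A1 A2] [B1 B2]. apply Rle_antisym; [apply B2|apply A2]; assumption. Qed.

Lemma key_lemma {X} (d : X -> X -> R) B r b0 x x' s s' : CAT0_space d ->
  is_circumradius d B r -> B b0 ->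
  (forall b, B b -> d x b <= s) -> (forall b, B b -> d x' b <= s') ->
  (d x x')^2 <= 2*s^2 + 2*s'^2 - 4*r^2.
Proof.
  intros HC Hr Hb0 Hs Hs'.
  destruct HC as [M [G C]] eqn:EC.
  assert (s0 : 0 <= s) by (pose proof (met_pos d M x b0); pose proof (Hs b0 Hb0); lra).
  assert (s0' : 0 <= s') by (pose proof (met_pos d M x' b0); pose proof (Hs' b0 Hb0); lra).
  pose proof (rad_nonneg d B r Hr) as r0.
  pose proof (rad_le d B r x s Hr Hs s0) as rs.
  pose proof (rad_le d B r x' s' Hr Hs' s0') as rs'.
  pose proof (met_pos d M x x') as P.
  destruct (Req_dec (d x x') 0) as [h|h].
  { rewrite h. nra. }
  destruct (apollonius d HC x x') as [m Hm]; [lra|].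
  set (v := s^2/2 + s'^2/2 - (d x x')^2/4).
  assert (Hv : forall b, B b -> (d m b)^2 <= v).
  { intros b Bb. pose proof (Hm b). pose proof (Hs b Bb). pose proof (Hs' b Bb).
    pose proof (met_pos d M x b). pose proof (met_pos d M x' b). unfold v. nra. }
  assert (v0 : 0 <= v) by (pose proof (Hv b0 Hb0); nra).
  assert (Hv2 : forall b, B b -> d m b <= sqrt v).
  { intros b Bb. rewrite <- (sqrt_pow2 (d m b)) by (apply met_pos; exact M).
    apply sqrt_le_1_alt. apply Hv; exact Bb. }
  pose proof (rad_le d B r m (sqrt v) Hr Hv2 (sqrt_pos v)) as rv.
  assert (r^2 <= v) by (rewrite <- (pow2_sqrt v v0); nra).
  unfold v in *. nra.
Qed.

Lemma exists_rad {X} (d : X -> X -> R) B : (exists x, B x) -> bounded_set d B ->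
  exists r, is_circumradius d B r.
Proof.
  intros [b0 Hb0] [x0 [r0 H0]].
  set (S := fun s => 0 < s /\ exists x, forall b, B b -> d x b <= s).
  destruct (completeness (fun t => S (- t))) as [m [Hm1 Hm2]].
  { exists 0. intros t [Ht _]. lra. }
  { exists (- (Rabs r0 + 1)). unfold S. rewrite Ropp_involutive. split.
    - pose proof (Rabs_pos r0). lra.
    - exists x0. intros b Bb. pose proof (H0 b Bb). pose proof (Rle_abs r0). lra. }
  exists (- m). split.
  - intros s Hs. assert (- s <= m) by (apply Hm1; unfold S; rewrite Ropp_involutive; exact Hs). lra.
  - intros m' Hm'. assert (m <= - m'); [|lra].
    apply Hm2. intros t Ht. specialize (Hm' (- t) Ht). lra.
Qed.

Lemma small_inv a : 0 < a -> exists N : nat, / (INR N + 1) < a.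
Proof.
  intros Ha. destruct (archimed_cor1 a Ha) as [N [H1 H2]]. exists N.
  apply lt_0_INR in H2.
  apply Rle_lt_trans with (/ INR N); [|exact H1].
  apply Rinv_le_contravar; lra.
Qed.

Lemma inv_mono (k N : nat) : (N <= k)%nat -> / (INR k + 1) <= / (INR N + 1).
Proof.
  intros H. apply le_INR in H. pose proof (pos_INR N).
  apply Rinv_le_contravar; lra.
Qed.

Lemma inv_pos_le (k : nat) : 0 < / (INR k + 1) <= 1.
Proof.
  pose proof (pos_INR k). split.
  - apply Rinv_0_lt_compat; lra.
  - rewrite <- Rinv_1. apply Rinv_le_contravar; lra.
Qed.

Lemma list_bound {X} (z : nat -> X) (l : list (X -> Prop)) :
  (forall U, In U l -> exists N, forall k, (N <= k)%nat -> ~ U (z k)) ->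
  exists N, forall U, In U l -> forall k, (N <= k)%nat -> ~ U (z k).
Proof.
  induction l as [|U0 l IH]; intros H.
  - exists 0%nat. intros U [].
  - destruct (H U0 (or_introl eq_refl)) as [N0 HN0].
    destruct IH as [N1 HN1]. { intros U HU. apply H. right. exact HU. }
    exists (Nat.max N0 N1). intros U [<-|HU] k Hk.
    + apply HN0. lia.
    + apply HN1; [exact HU|lia].
Qed.

Lemma proper_complete {X} (d : X -> X -> R) (z : nat -> X) : is_metric d -> proper_space d ->
  (forall e, 0 < e -> exists N, forall k l, (N <= k)%nat -> (N <= l)%nat -> d (z k) (z l) < e) ->
  (exists x0 R0, forall k, d x0 (z k) <= R0) ->
  exists c, forall e, 0 < e -> exists N, forall k, (N <= k)%nat -> d c (z k) < e.
Proof.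
  intros M P Cau [x0 [R0 HB]]. apply NNPP. intro NC.
  set (F := fun U : X -> Prop => open_set d U /\ exists N, forall k, (N <= k)%nat -> ~ U (z k)).
  destruct (P x0 R0 F) as [l [Hl1 Hl2]].
  - intros U [HU _]. exact HU.
  - intros p _.
    assert (Hp : exists e, 0 < e /\ forall N, exists k, (N <= k)%nat /\ e <= d p (z k)).
    { apply NNPP. intro Hn. apply NC. exists p. intros e He. apply NNPP. intro Hn2.
      apply Hn. exists e. split; [exact He|]. intros N. apply NNPP. intro Hn3.
      apply Hn2. exists N. intros k Hk. apply NNPP. intro Hn4. apply Hn3. exists k.
      split; [exact Hk|]. lra. }
    destruct Hp as [e [He Hp]].
    destruct (Cau (e/2)) as [N HN]; [lra|].
    exists (fun y => d p y < e/2). split; [split|].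
    + intros y Hy. exists (e/2 - d p y). split; [lra|]. intros y' Hy'.
      pose proof (met_tri d M p y y'). lra.
    + exists N. intros k Hk Hc. destruct (Hp N) as [k0 [Hk0 Hd]].
      pose proof (HN k k0 Hk Hk0). pose proof (met_tri d M p (z k) (z k0)). lra.
    + simpl. rewrite (met_refl d M). lra.
  - destruct (list_bound z l) as [N HN].
    + intros U HU. destruct (Hl1 U HU) as [_ H]. exact H.
    + destruct (Hl2 (z N) (HB N)) as [U [HU HzU]].
      exact (HN U HU N (le_n N) HzU).
Qed.

Lemma exists_center {X} (d : X -> X -> R) B b0 r : CAT0_space d -> proper_space d -> B b0 ->
  is_circumradius d B r -> exists c, is_circumcenter d B c.
Proof.
  intros HC HP Hb0 Hr.
  pose proof HC as [M _].
  pose proof (rad_nonneg d B r Hr) as r0.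
  assert (Hk : forall k : nat, exists x, forall b, B b -> d x b <= r + / (INR k + 1)).
  { intros k. destruct (rad_approx d B r (/ (INR k + 1)) Hr (proj1 (inv_pos_le k))) as [s [x [h1 h2]]].
    exists x. intros b Bb. pose proof (h2 b Bb). lra. }
  set (z := fun k => proj1_sig (constructive_indefinite_description _ (Hk k))).
  assert (Hz : forall k b, B b -> d (z k) b <= r + / (INR k + 1)).
  { intros k. unfold z. destruct (constructive_indefinite_description _ (Hk k)) as [x Hx]. exact Hx. }
  destruct (proper_complete d z M HP) as [c Hc].
  - intros e He. destruct (small_inv (e^2 / (8*r+4))) as [N HN].
    { apply Rdiv_lt_0_compat; nra. }
    exists N. intros k l Hkl Hll.
    pose proof (key_lemma d B r b0 (z k) (z l) _ _ HC Hr Hb0 (Hz k) (Hz l)) as K.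
    pose proof (inv_mono k N Hkl). pose proof (inv_mono l N Hll).
    pose proof (inv_pos_le k). pose proof (inv_pos_le l). pose proof (inv_pos_le N).
    set (a := / (INR k + 1)) in *. set (b := / (INR l + 1)) in *. set (c := / (INR N + 1)) in *.
    assert (HN' : c * (8*r+4) < e^2).
    { apply Rmult_lt_reg_r with (/ (8*r+4)). apply Rinv_0_lt_compat; lra.
      rewrite Rmult_assoc, Rinv_r by lra. lra. }
    assert (Hd2 : (d (z k) (z l))^2 < e^2) by nra.
    pose proof (met_pos d M (z k) (z l)). nra.
  - exists (z 0%nat), (2*r+2). intros k.
    pose proof (met_tri d M (z 0%nat) b0 (z k)). pose proof (Hz 0%nat b0 Hb0).
    pose proof (Hz k b0 Hb0). rewrite (met_sym d M b0 (z k)) in H.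
    pose proof (inv_pos_le 0). pose proof (inv_pos_le k). lra.
  - exists c, r. split; [exact Hr|]. intros b Bb.
    apply Rle_plus_epsilon. intros e He.
    destruct (Hc (e/2)) as [N1 HN1]; [lra|].
    destruct (small_inv (e/2)) as [N2 HN2]; [lra|].
    set (k := Nat.max N1 N2).
    pose proof (HN1 k (Nat.le_max_l _ _)). pose proof (inv_mono k N2 (Nat.le_max_r _ _)).
    pose proof (Hz k b Bb). pose proof (met_tri d M c (z k) b). lra.
Qed.

Lemma A_ext {Om} (A : (Om -> Prop) -> Prop) (S S' : Om -> Prop) :
  A S -> (forall x, S x <-> S' x) -> A S'.
Proof.
  intros H E. replace S' with S; [exact H|].
  apply functional_extensionality. intros x. apply propositional_extensionality. apply E.
Qed.

Lemma A_compl {Om} (A : (Om -> Prop) -> Prop) S : is_sigma_algebra A -> A S -> A (fun x => ~ S x).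
Proof. intros [_ [H _]]. apply H. Qed.

Lemma A_union {Om} (A : (Om -> Prop) -> Prop) (S : nat -> Om -> Prop) : is_sigma_algebra A ->
  (forall n, A (S n)) -> A (fun x => exists n, S n x).
Proof. intros [_ [_ H]]. apply H. Qed.

Lemma A_False {Om} (A : (Om -> Prop) -> Prop) : is_sigma_algebra A -> A (fun _ => False).
Proof.
  intros HA. apply (A_ext A (fun x => ~ True)). apply A_compl; [exact HA|apply HA]. tauto.
Qed.

Lemma A_inter {Om} (A : (Om -> Prop) -> Prop) (S : nat -> Om -> Prop) : is_sigma_algebra A ->
  (forall n, A (S n)) -> A (fun x => forall n, S n x).
Proof.
  intros HA H. apply (A_ext A (fun x => ~ exists n, ~ S n x)).
  - apply A_compl; [exact HA|]. apply A_union; [exact HA|]. intros n. apply A_compl; auto.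
  - intros x. split.
    + intros h n. apply NNPP. intro h'. apply h. exists n. exact h'.
    + intros h [n hn]. apply hn, h.
Qed.

Lemma A_or {Om} (A : (Om -> Prop) -> Prop) S T : is_sigma_algebra A -> A S -> A T ->
  A (fun x => S x \/ T x).
Proof.
  intros HA HS HT.
  apply (A_ext A (fun x => exists n, (match n with O => S | _ => T end) x)).
  - apply A_union; [exact HA|]. intros [|n]; assumption.
  - intros x. split.
    + intros [[|n] h]; [left|right]; exact h.
    + intros [h|h]; [exists O|exists 1%nat]; exact h.
Qed.

Lemma A_and {Om} (A : (Om -> Prop) -> Prop) S T : is_sigma_algebra A -> A S -> A T ->
  A (fun x => S x /\ T x).
Proof.
  intros HA HS HT.
  apply (A_ext A (fun x => forall n, (match n with O => S | _ => T end) x)).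
  - apply A_inter; [exact HA|]. intros [|n]; assumption.
  - intros x. split.
    + intros h. split; [apply (h O)|apply (h 1%nat)].
    + intros [h1 h2] [|n]; assumption.
Qed.

Lemma A_union_Z {Om} (A : (Om -> Prop) -> Prop) (S : Z -> Om -> Prop) : is_sigma_algebra A ->
  (forall z, A (S z)) -> A (fun x => exists z, S z x).
Proof.
  intros HA H.
  apply (A_ext A (fun x => exists n, S (Z.of_nat n) x \/ S (- Z.of_nat n)%Z x)).
  - apply A_union; [exact HA|]. intros n. apply A_or; auto.
  - intros x. split.
    + intros [n [h|h]]; eexists; exact h.
    + intros [[|p|p] h].
      * exists O. left. exact h.
      * exists (Pos.to_nat p). left. rewrite positive_nat_Z. exact h.
      * exists (Pos.to_nat p). right. rewrite positive_nat_Z. exact h.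
Qed.

Lemma open_lt a : R_open (fun y => y < a).
Proof. intros x Hx. exists (a - x). split; [lra|]. intros y Hy.
  pose proof (Rle_abs (y - x)). lra. Qed.
Lemma open_gt a : R_open (fun y => a < y).
Proof. intros x Hx. exists (x - a). split; [lra|]. intros y Hy.
  pose proof (Rle_abs (- (y - x))). rewrite Rabs_Ropp in H. lra. Qed.

Lemma open_Borel U : R_open U -> R_Borel U.
Proof. intros H M _ HM. apply HM, H. Qed.

Lemma Borel_lt {Om} (A : (Om -> Prop) -> Prop) f a : Borel_function A f -> A (fun w => f w < a).
Proof. intros H. apply (H (fun y => y < a)). apply open_Borel, open_lt. Qed.
Lemma Borel_gt {Om} (A : (Om -> Prop) -> Prop) f a : Borel_function A f -> A (fun w => a < f w).
Proof. intros H. apply (H (fun y => a < y)). apply open_Borel, open_gt. Qed.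
Lemma Borel_le {Om} (A : (Om -> Prop) -> Prop) f a : is_sigma_algebra A ->
  Borel_function A f -> A (fun w => f w <= a).
Proof. intros HA H. apply (A_ext A (fun w => ~ (a < f w))).
  - apply A_compl; [exact HA|]. apply Borel_gt, H.
  - intros w. split; intros; lra. Qed.

Lemma gt_of_lt {Om} (A : (Om -> Prop) -> Prop) f q : is_sigma_algebra A ->
  (forall a, A (fun w => f w < a)) -> A (fun w => q < f w).
Proof.
  intros HA H. apply (A_ext A (fun w => exists n, ~ (f w < q + / (INR n + 1)))).
  - apply A_union; [exact HA|]. intros n. apply A_compl; auto.
  - intros w. split.
    + intros [n hn]. pose proof (inv_pos_le n). lra.
    + intros h. destruct (small_inv (f w - q)) as [n hn]; [lra|]. exists n. lra.
Qed.

Lemma Borel_of_lt {Om} (A : (Om -> Prop) -> Prop) f : is_sigma_algebra A ->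
  (forall a, A (fun w => f w < a)) -> Borel_function A f.
Proof.
  intros HA H S HS. apply HS.
  - split; [|split].
    + apply HA.
    + intros T HT. apply A_compl; assumption.
    + intros T HT. apply (A_union A (fun n w => T n (f w))); assumption.
  - intros U HU.
    set (q := fun (k : nat) (j : Z) => IZR j / (INR k + 1)).
    set (T := fun k j y => (forall z, q k j < z < q k (j+2)%Z -> U z) /\ q k j < y < q k (j+2)%Z).
    apply (A_ext A (fun w => exists k, exists j, T k j (f w))).
    + apply A_union; [exact HA|]. intros k. apply A_union_Z; [exact HA|]. intros j.
      destruct (classic (forall z, q k j < z < q k (j+2)%Z -> U z)) as [c|c].
      * apply (A_ext A (fun w => q k j < f w /\ f w < q k (j+2)%Z)).
        -- apply A_and; [exact HA| |apply H]. apply gt_of_lt; assumption.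
        -- intros w. unfold T. split; [intros h; split; [exact c|lra]|intros [_ h]; lra].
      * apply (A_ext A (fun _ => False)). apply A_False, HA.
        intros w. unfold T. tauto.
    + intros w. split.
      * intros [k [j [h1 h2]]]. apply h1. exact h2.
      * intros h. destruct (HU (f w) h) as [e [He He2]].
        destruct (small_inv (e/2)) as [k hk]; [lra|].
        pose proof (pos_INR k) as hk0.
        set (N := (up (f w * (INR k + 1)) - 2)%Z).
        destruct (archimed (f w * (INR k + 1))) as [a1 a2].
        assert (E1 : q k N = (IZR (up (f w * (INR k + 1))) - 2) / (INR k + 1)).
        { unfold q, N. rewrite minus_IZR. reflexivity. }
        assert (E2 : q k (N + 2)%Z = IZR (up (f w * (INR k + 1))) / (INR k + 1)).
        { unfold q, N. f_equal. f_equal. ring. }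
        assert (I1 : q k N < f w).
        { rewrite E1. apply Rmult_lt_reg_r with (INR k + 1); [lra|].
          unfold Rdiv. rewrite Rmult_assoc, Rinv_l by lra. lra. }
        assert (I2 : f w < q k (N+2)%Z).
        { rewrite E2. apply Rmult_lt_reg_r with (INR k + 1); [lra|].
          unfold Rdiv. rewrite Rmult_assoc, Rinv_l by lra. lra. }
        assert (W : q k (N+2)%Z - q k N = 2 * / (INR k + 1)).
        { rewrite E1, E2. field. lra. }
        exists k, N. split; [|lra].
        intros z hz. apply He2. apply Rabs_def1; lra.
Qed.

Lemma Borel_lt2 {Om} (A : (Om -> Prop) -> Prop) f g : is_sigma_algebra A ->
  Borel_function A f -> Borel_function A g -> A (fun w => f w < g w).
Proof.
  intros HA Hf Hg.
  apply (A_ext A (fun w => exists k, exists j, f w < IZR j / (INR k + 1) /\ IZR j / (INR k + 1) < g w)).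
  - apply A_union; [exact HA|]. intros k. apply A_union_Z; [exact HA|]. intros j.
    apply A_and; [exact HA|apply Borel_lt, Hf|apply Borel_gt, Hg].
  - intros w. split.
    + intros [k [j h]]. lra.
    + intros h. destruct (small_inv (g w - f w)) as [k hk]; [lra|].
      pose proof (pos_INR k) as hk0.
      destruct (archimed (f w * (INR k + 1))) as [a1 a2].
      exists k, (up (f w * (INR k + 1))). split.
      * apply Rmult_lt_reg_r with (INR k + 1); [lra|].
        unfold Rdiv. rewrite Rmult_assoc, Rinv_l by lra. lra.
      * assert (IZR (up (f w * (INR k + 1))) / (INR k + 1) <= f w + / (INR k + 1)).
        { apply Rmult_le_reg_r with (INR k + 1); [lra|].
          unfold Rdiv. rewrite Rmult_assoc, Rinv_l, Rmult_plus_distr_r, Rinv_l by lra. lra. }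
        lra.
Qed.

Lemma Borel_le2 {Om} (A : (Om -> Prop) -> Prop) f g : is_sigma_algebra A ->
  Borel_function A f -> Borel_function A g -> A (fun w => f w <= g w).
Proof.
  intros HA Hf Hg. apply (A_ext A (fun w => ~ (g w < f w))).
  - apply A_compl; [exact HA|]. apply Borel_lt2; assumption.
  - intros w; split; intros; lra.
Qed.

Lemma Borel_comp {Om} (A : (Om -> Prop) -> Prop) (phi : R -> R) f : is_sigma_algebra A ->
  (forall x, continuity_pt phi x) -> Borel_function A f -> Borel_function A (fun w => phi (f w)).
Proof.
  intros HA Hc Hf. apply Borel_of_lt; [exact HA|]. intros a.
  apply (Hf (fun y => phi y < a)). apply open_Borel.
  intros x hx. destruct (Hc x (a - phi x)) as [al [Hal Hal2]]; [lra|].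
  exists al. split; [exact Hal|]. intros y hy.
  destruct (Req_dec y x) as [->|ne]; [exact hx|].
  assert (R_dist (phi y) (phi x) < a - phi x).
  { apply Hal2. split; [split; [exact I|auto]|exact hy]. }
  unfold R_dist in H. pose proof (Rle_abs (phi y - phi x)). lra.
Qed.

Theorem mainTheorem8 (Om : Type) (A : (Om -> Prop) -> Prop) (X : Om -> Type)
  (d : forall w, X w -> X w -> R) (L : section X -> Prop) (B : forall w, X w -> Prop) :
  is_sigma_algebra A ->
  (forall w, CAT0_space (d w) /\ proper_space (d w)) ->
  is_Borel_structure A X d L ->
  is_Borel_subfield A X d L B ->
  (forall w, (exists x, B w x) /\ bounded_set (d w) (B w)) ->
  (* (i) the circumradius function is Borel *)
  ((exists rad : Om -> R, forall w, is_circumradius (d w) (B w) (rad w)) /\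
   (forall rad : Om -> R, (forall w, is_circumradius (d w) (B w) (rad w)) ->
      Borel_function A rad)) /\
  (* (ii) the section of circumcenters is a Borel section *)
  ((exists c : section X, forall w, is_circumcenter (d w) (B w) (c w)) /\
   (forall c : section X, (forall w, is_circumcenter (d w) (B w) (c w)) -> L c)).
Proof.
  intros HA HX [Ha [Hb [D [HDL HD]]]] [HBA [y [HyL Hy]]] Hne.
  assert (Hrad : forall w, exists r, is_circumradius (d w) (B w) r).
  { intros w. destruct (Hne w) as [h1 h2]. apply exists_rad; assumption. }
  assert (Rad : forall rad, (forall w, is_circumradius (d w) (B w) (rad w)) -> Borel_function A rad).
  { intros rad Hr. apply Borel_of_lt; [exact HA|]. intros a.
    apply (A_ext A (fun w => exists n, exists k, forall m, d w (D n w) (y m w) <= a - / (INR k + 1))).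
    - apply A_union; [exact HA|]; intros n; apply A_union; [exact HA|]; intros k.
      apply A_inter; [exact HA|]. intros m. apply Borel_le; [exact HA|]. apply Ha; auto.
    - intros w. destruct (HX w) as [HC HP]. pose proof HC as [M _].
      destruct (Hy w (proj1 (Hne w))) as [HyB Hyd].
      split.
      + intros [n [k Hk]].
        assert (Hb' : forall b, B w b -> d w (D n w) b <= a - /(INR k+1)).
        { intros b Bb. apply Rle_plus_epsilon. intros e He. destruct (Hyd b Bb e He) as [m hm].
          pose proof (Hk m). pose proof (met_tri _ M (D n w) (y m w) b).
          rewrite (met_sym _ M (y m w) b) in H0. lra. }
        assert (t0 : 0 <= a - / (INR k + 1)).
        { pose proof (Hk 0%nat). pose proof (met_pos _ M (D n w) (y 0%nat w)). lra. }
        pose proof (rad_le _ _ _ _ _ (Hr w) Hb' t0). pose proof (inv_pos_le k). lra.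
      + intros h. destruct (small_inv ((a - rad w)/3)) as [k hk]; [lra|].
        destruct (rad_approx _ _ _ _ (Hr w) (proj1 (inv_pos_le k))) as [s [x [hs hx]]].
        destruct (HD w x (/ (INR k + 1)) (proj1 (inv_pos_le k))) as [n hn].
        exists n, k. intros m. pose proof (hx _ (HyB m)).
        pose proof (met_tri _ M (D n w) x (y m w)). lra. }
  set (rad0 := fun w => proj1_sig (constructive_indefinite_description _ (Hrad w))).
  assert (Hr0 : forall w, is_circumradius (d w) (B w) (rad0 w)).
  { intros w. unfold rad0. destruct (constructive_indefinite_description _ _). assumption. }
  split; [split; [exists rad0; exact Hr0|exact Rad]|].
  split.
  - assert (Hc : forall w, exists c : X w, is_circumcenter (d w) (B w) c).
    { intros w. destruct (Hne w) as [[b0 hb0] _]. destruct (HX w).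
      apply (exists_center (d w) (B w) b0 (rad0 w)); auto. }
    exists (fun w => proj1_sig (constructive_indefinite_description _ (Hc w))).
    intros w. destruct (constructive_indefinite_description _ _). assumption.
  - intros c Hc. apply Hb. intros x Hx. apply Borel_of_lt; [exact HA|]. intros a.
    pose proof (Rad rad0 Hr0) as Br.
    apply (A_ext A (fun w => exists k, exists n,
       (forall m, (d w (D n w) (y m w))^2 <= (rad0 w)^2 + (/ (INR k + 1))^2/2) /\
       d w (x w) (D n w) < a - / (INR k + 1))).
    + apply A_union; [exact HA|]; intros k; apply A_union; [exact HA|]; intros n.
      apply A_and; [exact HA| |apply Borel_lt, Ha; auto].
      apply A_inter; [exact HA|]. intros m.
      apply (Borel_le2 A (fun w => (d w (D n w) (y m w))^2) (fun w => (rad0 w)^2 + (/ (INR k + 1))^2/2)); [exact HA| |].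
      * apply (Borel_comp A (fun t => t^2)); [exact HA| intros t; reg |apply Ha; auto].
      * apply (Borel_comp A (fun t => t^2 + (/ (INR k + 1))^2/2)); [exact HA| intros t; reg |exact Br].
    + intros w. destruct (HX w) as [HC HP]. pose proof HC as [M _].
      destruct (Hne w) as [[b0 hb0] _].
      destruct (Hy w (ex_intro _ b0 hb0)) as [HyB Hyd].
      destruct (Hc w) as [r' [Hr' Hcb]].
      rewrite (inf_unique _ _ _ Hr' (Hr0 w)) in Hcb.
      pose proof (rad_nonneg _ _ _ (Hr0 w)) as r0.
      set (r := rad0 w) in *.
      split.
      * intros [k [n [Hk Hxn]]].
        set (dl := / (INR k + 1)) in *. pose proof (inv_pos_le k) as hdl. fold dl in hdl.
        set (s := sqrt (r^2 + dl^2/2)).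
        assert (hs : s^2 = r^2 + dl^2/2) by (apply pow2_sqrt; nra).
        assert (Hs : forall b, B w b -> d w (D n w) b <= s).
        { intros b Bb. apply Rle_plus_epsilon. intros e He. destruct (Hyd b Bb e He) as [m hm].
          pose proof (Hk m).
          assert (d w (D n w) (y m w) <= s).
          { rewrite <- (sqrt_pow2 (d w (D n w) (y m w))) by (apply met_pos; exact M).
            apply sqrt_le_1_alt. assumption. }
          pose proof (met_tri _ M (D n w) (y m w) b).
          rewrite (met_sym _ M (y m w) b) in H1. lra. }
        pose proof (key_lemma _ _ _ _ _ _ _ _ HC (Hr0 w) hb0 Hs Hcb) as K.
        assert (d w (D n w) (c w) <= dl).
        { pose proof (met_pos _ M (D n w) (c w)). rewrite hs in K.
          fold r in K. assert (d w (D n w) (c w) ^2 <= dl^2) by lra.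
          destruct (Rle_or_lt (d w (D n w) (c w)) dl) as [hh|hh]; [exact hh|].
          assert (dl * dl < d w (D n w) (c w) * d w (D n w) (c w)) by (apply Rmult_le_0_lt_compat; lra).
          simpl in H1. lra. }
        pose proof (met_tri _ M (x w) (D n w) (c w)). lra.
      * intros h.
        destruct (small_inv ((a - d w (x w) (c w))/3)) as [k hk]; [lra|].
        set (dl := / (INR k + 1)) in *. pose proof (inv_pos_le k) as hdl. fold dl in hdl.
        set (t := Rmin dl (dl^2/(2*(2*r+1)))).
        assert (ht0 : 0 < t).
        { unfold t. apply Rmin_glb_lt; [lra|]. apply Rdiv_lt_0_compat; nra. }
        assert (ht1 : t <= dl) by apply Rmin_l.
        assert (ht2 : t * (2*r+1) <= dl^2/2).
        { assert (t <= dl^2/(2*(2*r+1))) by apply Rmin_r.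
          apply Rmult_le_compat_r with (r := 2*r+1) in H; [|lra].
          replace (dl ^ 2 / (2 * (2 * r + 1)) * (2 * r + 1)) with (dl^2/2) in H by (field; lra).
          exact H. }
        destruct (HD w (c w) t ht0) as [n hn].
        exists k, n. split.
        -- intros m. pose proof (Hcb _ (HyB m)). pose proof (met_tri _ M (D n w) (c w) (y m w)).
           pose proof (met_pos _ M (D n w) (y m w)).
           assert (h1 : d w (D n w) (y m w) <= t + r) by lra.
           assert (h2 : d w (D n w) (y m w) ^ 2 <= (t + r)^2) by (apply pow_incr; lra).
           assert (h3 : t * t <= t * 1) by (apply Rmult_le_compat_l; lra).
           fold dl. replace ((t+r)^2) with (r^2 + t*(2*r+1) - t*1 + t*t) in h2 by ring. lra.
        -- pose proof (met_tri _ M (x w) (c w) (D n w)).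
           rewrite (met_sym _ M (c w) (D n w)) in H. fold dl. lra.
Qed.
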